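(* Suppose $\sigma$ is an automorphism of $D$ and $f\in D[t;\sigma,\delta]$ is monic of degree $m\ge2$ and irreducible. (i) If $D\subseteq\mathrm{Nuc}_r(S_f)$ then $S_f$ is a division algebra. (ii) If there is a subalgebra $B\subseteq D$ such that $B\subseteq\mathrm{Nuc}_r(S_f)$ and $D$ is free of finite rank as a right $B$-module, then $S_f$ is a division algebra.
   Context: $D$ is an associative division ring, $\sigma$ a ring endomorphism of $D$, $\delta$ a left $\sigma$-derivation. $D[t;\sigma,\delta]$ is the skew polynomial ring with $ta=\sigma(a)t+\delta(a)$. For monic $f$ of degree $m$, $S_f$ is the set of polynomials of degree $<m$ with multiplication $g\circ h=$ remainder of $gh$ upon right division by $f$; $D$ is identified with the constants. $\mathrm{Nuc}_r(S_f)=\{x: (yz)x=y(zx)\ \forall y,z\in S_f\}$. $f$ irreducible means not a unit and no factorization $f=gh$ with $\deg g,\deg h<\deg f$. $S_f$ is a division algebra if left and right multiplication by every nonzero element are bijective. *)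

(* Defs.v *)
(* Skew polynomial ring D[t; sigma, delta] over a division ring D,
   represented additively by coefficient lists {poly D} (p = \sum_i p_i t^i,
   coefficients on the LEFT), with the skew multiplication defined below. *)
From HB Require Import structures.
From mathcomp Require Import all_boot all_order all_algebra.
Set Implicit Arguments. Unset Strict Implicit. Unset Printing Implicit Defensive.
Import Order.TTheory GRing.Theory.
Local Open Scope ring_scope.

Section Skew.
Variables (D : unitRingType) (sigma : {rmorphism D -> D}) (delta : D -> D).

Definition division_ring : Prop := forall x : D, x != 0 -> x \is a GRing.unit.

(* delta is a left sigma-derivation: t a = sigma(a) t + delta(a) *)
Definition left_sigma_derivation : Prop :=
  (forall x y, delta (x + y) = delta x + delta y) /\
  (forall x y, delta (x * y) = sigma x * delta y + delta x * y).

(* left multiplication by t:  t * (sum q_k t^k) = sum (sigma(q_k) t^(k+1) + delta(q_k) t^k) *)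
Definition tmul (q : {poly D}) : {poly D} :=
  map_poly sigma q * 'X + map_poly delta q.

Definition smul (p q : {poly D}) : {poly D} :=
  \sum_(i < size p) p`_i *: iter i tmul q.

Definition sunit (f : {poly D}) : Prop :=
  exists g, smul f g = 1 /\ smul g f = 1.

Definition sirreducible (f : {poly D}) : Prop :=
  ~ sunit f /\
  ~ (exists g h : {poly D}, f = smul g h /\ (size g < size f)%N /\ (size h < size f)%N).

Fixpoint rmodf (f : {poly D}) (n : nat) (g : {poly D}) : {poly D} :=
  match n with
  | 0 => g
  | n'.+1 =>
    if (size g < size f)%N then g
    else rmodf f n' (g - smul (lead_coef g *: 'X^(size g - size f)) f)
  end.

Definition srmod (g f : {poly D}) : {poly D} := rmodf f (size g) g.

Definition mulSf (f g h : {poly D}) : {poly D} := srmod (smul g h) f.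

Definition inSf (f g : {poly D}) : bool := (size g < size f)%N.

Definition in_right_nucleus (f x : {poly D}) : Prop :=
  inSf f x /\
  forall y z, inSf f y -> inSf f z ->
    mulSf f (mulSf f y z) x = mulSf f y (mulSf f z x).

Definition Sf_division (f : {poly D}) : Prop :=
  forall a, inSf f a -> a != 0 ->
    (forall b, inSf f b -> exists! x, inSf f x /\ mulSf f a x = b) /\
    (forall b, inSf f b -> exists! x, inSf f x /\ mulSf f x a = b).

Definition base_field (c : D) : Prop :=
  (forall x, c * x = x * c) /\ sigma c = c /\ delta c = 0.

Definition is_subalgebra (B : {pred D}) : Prop :=
  1 \in B /\
  (forall x y, x \in B -> y \in B -> x + y \in B) /\
  (forall x, x \in B -> - x \in B) /\
  (forall x y, x \in B -> y \in B -> x * y \in B) /\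
  (forall c x, base_field c -> x \in B -> c * x \in B).

Definition free_finite_right (B : {pred D}) : Prop :=
  exists (n : nat) (d : 'I_n -> D),
    (forall x : D, exists b : 'I_n -> D,
        (forall i, b i \in B) /\ x = \sum_(i < n) d i * b i) /\
    (forall b : 'I_n -> D, (forall i, b i \in B) ->
        \sum_(i < n) d i * b i = 0 -> forall i, b i = 0).

End Skew.

(* Main.v *)
Require Import Defs.
From HB Require Import structures.
From mathcomp Require Import all_boot all_order all_algebra.
From Stdlib Require Import Classical.
Import GRing.Theory.
Local Open Scope ring_scope.

Module Aux.
Set Implicit Arguments. Unset Strict Implicit. Unset Printing Implicit Defensive.

Lemma fin_choice (T : Type) (P : nat -> T -> Prop) N :
  (forall i, (i <= N)%N -> exists a, P i a) ->
  exists A : nat -> T, forall i, (i <= N)%N -> P i (A i).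
Proof.
elim: N => [|N IH] H.
  have [a Ha] := H 0%N (leqnn 0); exists (fun _ => a) => i; rewrite leqn0 => /eqP ->; exact Ha.
have [A HA] := IH (fun i hi => H i (leqW hi)).
have [a Ha] := H N.+1 (leqnn _).
exists (fun i => if i == N.+1 then a else A i) => i hi.
case: eqP => [->//|/eqP ne]; apply: HA; by rewrite -ltnS ltn_neqAle ne hi.
Qed.

Lemma min_ex (P : nat -> Prop) : (exists n, P n) -> exists n, P n /\ forall k, P k -> (n <= k)%N.
Proof.
move=> [n Pn].
elim: n {-2}n (leqnn n) Pn => [|n IH] k Hk Pk.
  by exists k; split => // j _; move: Hk; rewrite leqn0 => /eqP ->.
destruct (classic (exists j, P j /\ (j < k)%N)) as [[j [Pj ltjk]]|Hno].
  apply: (IH j) => //; by rewrite -ltnS (leq_trans ltjk Hk).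
exists k; split => // j Pj; rewrite leqNgt; apply/negP => ltj; apply: Hno; by exists j.
Qed.

Section LinAlg.
Variables (K : nzRingType) (B : pred K) (V : zmodType) (act : V -> K -> V).
Hypothesis B0 : 0 \in B.
Hypothesis B1 : 1 \in B.
Hypothesis BD : forall x y, x \in B -> y \in B -> x + y \in B.
Hypothesis BN : forall x, x \in B -> - x \in B.
Hypothesis BM : forall x y, x \in B -> y \in B -> x * y \in B.
Hypothesis Binv : forall x, x \in B -> x != 0 -> exists2 y, y \in B & (x * y = 1 /\ y * x = 1).
Hypothesis actDl : forall u v c, act (u + v) c = act u c + act v c.
Hypothesis actDr : forall u c1 c2, act u (c1 + c2) = act u c1 + act u c2.
Hypothesis actA : forall u c1 c2, act (act u c1) c2 = act u (c1 * c2).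
Hypothesis act1 : forall u, act u 1 = u.

Lemma act0r u : act u 0 = 0.
Proof. have H := actDr u 0 0; rewrite addr0 in H; by apply: (addrI (act u 0)); rewrite addr0 -H. Qed.
Lemma act0l c : act 0 c = 0.
Proof. have H := actDl 0 0 c; rewrite addr0 in H; by apply: (addrI (act 0 c)); rewrite addr0 -H. Qed.
Lemma actNr u c : act u (- c) = - act u c.
Proof. by apply/eqP; rewrite -subr_eq0 opprK -actDr addNr act0r. Qed.
Lemma actNl u c : act (- u) c = - act u c.
Proof. by apply/eqP; rewrite -subr_eq0 opprK -actDl addNr act0l. Qed.
Lemma actBr u c1 c2 : act u (c1 - c2) = act u c1 - act u c2.
Proof. by rewrite actDr actNr. Qed.
Lemma actBl u v c : act (u - v) c = act u c - act v c.
Proof. by rewrite actDl actNl. Qed.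
Lemma act_sumr u n (F : 'I_n -> K) : act u (\sum_(i < n) F i) = \sum_(i < n) act u (F i).
Proof. exact: (big_morph (act u) (actDr u) (act0r u)). Qed.
Lemma act_suml c n (F : 'I_n -> V) : act (\sum_(i < n) F i) c = \sum_(i < n) act (F i) c.
Proof. exact: (big_morph (act^~ c) (fun x y => actDl x y c) (act0l c)). Qed.
Lemma B_sum n (F : 'I_n -> K) : (forall i, F i \in B) -> \sum_(i < n) F i \in B.
Proof. by move=> H; apply: (big_ind (fun x => x \in B)) => // i _; apply: H. Qed.

Definition spans N (u v : nat -> V) (a : nat -> nat -> K) :=
  forall i, (i <= N)%N -> (forall j, a i j \in B) /\ v i = \sum_(j < N) act (u j) (a i j).

Definition depc N (v : nat -> V) :=
  exists c : nat -> K, (forall i, c i \in B) /\ (exists i, (i <= N)%N /\ c i != 0) /\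
     \sum_(i < N.+1) act (v i) (c i) = 0.

Lemma dep N u : forall v a, spans N u v a -> depc N v.
Proof.
elim: N => [|N IH] v a Hs.
  exists (fun _ => 1); split => //; split; first by exists 0%N; rewrite oner_neq0.
  by rewrite big_ord1 act1 (proj2 (Hs 0%N (leqnn _))) big_ord0.
have pivot : forall v a, spans N.+1 u v a -> a N.+1 N != 0 -> depc N.+1 v.
  move=> {}v {}a {}Hs piv.
  have [p' Bp' [pp' p'p]] := Binv (proj1 (Hs _ (leqnn _)) N) piv.
  pose e i := p' * a i N.
  pose w i := v i - act (v N.+1) (e i).
  pose a' i j := a i j - a N.+1 j * e i.
  have Hs' : spans N u w a'.
    move=> i hi; have [Bi Hvi] := Hs i (leqW hi); have [BN1 HvN] := Hs N.+1 (leqnn _).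
    split.
      move=> j; apply: BD; first exact: Bi.
      apply: BN; apply: BM; [exact: BN1| apply: BM; [exact: Bp'|exact: Bi]].
    have E0 : a i N - a N.+1 N * e i = 0 by rewrite /e mulrA pp' mul1r subrr.
    rewrite /w Hvi HvN act_suml -sumrB big_ord_recr /= actA -actBr E0 act0r addr0.
    apply: eq_bigr => j _; by rewrite actA -actBr.
  have [c' [Bc' [[i0 [hi0 ci0]] Hsum]]] := IH w a' Hs'.
  exists (fun i => if (i <= N)%N then c' i else - \sum_(k < N.+1) e k * c' k).
  split.
    move=> i; case: ifP => _ //; apply: BN; apply: B_sum => k; apply: BM => //.
    apply: BM => //; exact: (proj1 (Hs k (leqW (ltn_ord k))) N).
  split; first by exists i0; rewrite hi0 (leqW hi0).
  rewrite big_ord_recr /= ltnn.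
  have -> : \sum_(i < N.+1) act (v i) (if (i <= N)%N then c' i else - \sum_(k < N.+1) e k * c' k)
      = \sum_(i < N.+1) act (v i) (c' i).
    by apply: eq_bigr => i _; rewrite -ltnS ltn_ord.
  have E : \sum_(i < N.+1) act (w i) (c' i) = \sum_(i < N.+1) act (v i) (c' i) - act (v N.+1) (\sum_(k < N.+1) e k * c' k).
    rewrite act_sumr -sumrB; apply: eq_bigr => i _; by rewrite /w actBl actA.
  by rewrite Hsum in E; rewrite actNr -E.
case: (eqVneq (a N.+1 N) 0) => [a0|piv]; last exact: pivot piv.
destruct (classic (exists k, (k <= N)%N /\ a k N != 0)) as [[k [hk akN]]|Hno].
  pose v' i := if i == N.+1 then v N.+1 + v k else v i.
  pose a' i := if i == N.+1 then (fun j => a N.+1 j + a k j) else a i.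
  have Hs' : spans N.+1 u v' a'.
    move=> i hi; rewrite /v' /a'; case: eqP => [_|_]; last exact: Hs.
    have [B1' H1] := Hs _ (leqnn _); have [B2' H2] := Hs k (leqW hk).
    split; first by move=> j; apply: BD.
    by rewrite H1 H2 -big_split /=; apply: eq_bigr => j _; rewrite actDr.
  have piv' : a' N.+1 N != 0 by rewrite /a' eqxx a0 add0r.
  have [c [Bc [[i0 [hi0 ci0]] Hsum]]] := pivot v' a' Hs' piv'.
  have kneq : (N.+1 == k) = false by apply/negbTE; rewrite neq_ltn ltnS hk orbT.
  exists (fun i => c i + (if i == k then c N.+1 else 0)).
  split; first by move=> i; apply: BD => //; case: ifP.
  split.
    case: (eqVneq (c N.+1) 0) => [cN0|cN].
      by exists i0; split => //; case: ifP => _; rewrite ?cN0 addr0.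
    by exists N.+1; split => //; rewrite kneq addr0.
  under eq_bigr => i _ do rewrite actDr.
  rewrite big_split /=.
  have -> : \sum_(i < N.+2) act (v i) (if i == k :> nat then c N.+1 else 0) = act (v k) (c N.+1).
    rewrite (bigD1 (Ordinal (leqW (hk : (k < N.+1)%N)))) //= eqxx big1 ?addr0 // => i /negbTE ne.
    have -> : (i == k :> nat) = false by apply/negbTE; apply: contraFN ne => /eqP e; apply/eqP/val_inj.
    exact: act0r.
  rewrite big_ord_recr /= /v' eqxx actDl addrA in Hsum.
  rewrite big_ord_recr /=; apply: etrans Hsum.
  congr (_ + _); congr (_ + _); apply: eq_bigr => i _.
  by rewrite (ltn_eqF (ltn_ord i)).
have Hs' : spans N u v a.
  move=> i hi; have [Bi Hvi] := Hs i (leqW hi); split => //.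
  rewrite Hvi big_ord_recr /=.
  have -> : a i N = 0.
    by case: (eqVneq (a i N) 0) => // h; exfalso; apply: Hno; exists i.
  by rewrite act0r addr0.
have [c [Bc [[i0 [hi0 ci0]] Hsum]]] := IH v a Hs'.
exists (fun i => if (i <= N)%N then c i else 0); split; first by move=> i; case: ifP.
split; first by exists i0; rewrite hi0 (leqW hi0).
rewrite big_ord_recr /= ltnn act0r addr0; apply: etrans Hsum; apply: eq_bigr => i _.
by rewrite -ltnS ltn_ord.
Qed.

Variables (S : pred V) (phi : V -> V).
Hypothesis S0 : 0 \in S.
Hypothesis SD : forall x y, x \in S -> y \in S -> x + y \in S.
Hypothesis SN : forall x, x \in S -> - x \in S.
Hypothesis Sact : forall x c, x \in S -> c \in B -> act x c \in S.
Hypothesis phiS : forall x, x \in S -> phi x \in S.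
Hypothesis phiD : forall x y, x \in S -> y \in S -> phi (x + y) = phi x + phi y.
Hypothesis phiact : forall x c, x \in S -> c \in B -> phi (act x c) = act (phi x) c.
Hypothesis phiinj : forall x, x \in S -> phi x = 0 -> x = 0.

Lemma phi0 : phi 0 = 0.
Proof. have H := phiD S0 S0; rewrite addr0 in H; by apply: (addrI (phi 0)); rewrite addr0 -H. Qed.
Lemma phiN x : x \in S -> phi (- x) = - phi x.
Proof. by move=> xS; apply/eqP; rewrite -subr_eq0 opprK -phiD ?SN // addNr phi0. Qed.

Lemma S_sum n (F : 'I_n -> V) : (forall i, F i \in S) -> \sum_(i < n) F i \in S.
Proof. by move=> H; apply: (big_ind (fun x => x \in S)) => // i _; apply: H. Qed.
Lemma phi_sum n (F : 'I_n -> V) : (forall i, F i \in S) -> phi (\sum_(i < n) F i) = \sum_(i < n) phi (F i).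
Proof.
elim: n F => [|n IH] F H; first by rewrite !big_ord0 phi0.
rewrite !big_ord_recr /= phiD ?IH //; exact: S_sum.
Qed.

Definition spanS N (u : nat -> V) :=
  (forall j, (j < N)%N -> u j \in S) /\
  forall x, x \in S -> exists a : nat -> K, (forall j, a j \in B) /\ x = \sum_(j < N) act (u j) (a j).

Lemma surj N : forall u, spanS N u -> forall y, y \in S -> exists x, x \in S /\ phi x = y.
Proof.
elim: N => [|N IH] u [uS Hsp] y yS.
  have [a [_ ->]] := Hsp y yS; exists 0; by rewrite big_ord0 phi0.
pose v k := if k == N.+1 then y else phi (u k).
have vS : forall k, (k <= N.+1)%N -> v k \in S.
  by move=> k hk; rewrite /v; case: eqP => [//|/eqP ne]; apply/phiS/uS; rewrite ltn_neqAle ne hk.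
have [A HA] := @fin_choice (nat -> K) (fun (i : nat) (a : nat -> K) => (forall j : nat, a j \in B) /\ v i = \sum_(j < N.+1) act (u j) (a j))
  N.+1 (fun i hi => Hsp _ (vS i hi)).
have [c [Bc [[k0 [hk0 ck0]] Hsum]]] := dep (a:=A) HA.
rewrite big_ord_recr /= {2}/v eqxx in Hsum.
have Hvk : \sum_(i < N.+1) act (v i) (c i) = \sum_(i < N.+1) act (phi (u i)) (c i).
  by apply: eq_bigr => i _; rewrite /v (ltn_eqF (ltn_ord i)).
rewrite Hvk in Hsum.
have Hlin : forall cc : nat -> K, (forall i, cc i \in B) ->
    phi (\sum_(i < N.+1) act (u i) (cc i)) = \sum_(i < N.+1) act (phi (u i)) (cc i).
  move=> cc Bcc; rewrite phi_sum; last by move=> i; apply: Sact => //; apply: uS.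
  by apply: eq_bigr => i _; rewrite phiact //; apply: uS.
case: (eqVneq (c N.+1) 0) => [cN0|cN].
  rewrite cN0 act0r addr0 -Hlin // in Hsum.
  have Z := phiinj (S_sum (fun i => Sact (uS _ (ltn_ord i)) (Bc i))) Hsum.
  have k0N : (k0 <= N)%N.
    rewrite -ltnS ltn_neqAle hk0 andbT; apply/eqP => e; by rewrite e cN0 eqxx in ck0.
  have [c0' Bc0' [cc0' _]] := Binv (Bc k0) ck0.
  apply: (IH (fun j => if j == k0 then u N else u j)); last exact yS.
  split.
    move=> j hj; case: ifP => _; apply: uS => //; exact: leqW.
  move=> x xS; have [a [Ba Hx]] := Hsp x xS.
  pose a1 j := a j - c j * (c0' * a k0).
  have Ba1 : forall j, a1 j \in B by move=> j; apply: BD => //; apply/BN/BM => //; exact: BM.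
  have Hx1 : x = \sum_(j < N.+1) act (u j) (a1 j).
    rewrite /a1; under eq_bigr => j _ do rewrite actBr -actA.
    by rewrite sumrB -act_suml Z act0l subr0.
  have a1k0 : a1 k0 = 0 by rewrite /a1 mulrA cc0' mul1r subrr.
  exists (fun j => if j == k0 then a1 N else a1 j); split; first by move=> j; case: ifP.
  rewrite Hx1 big_ord_recr /=.
  case: (ltnP k0 N) => [lt|ge].
    rewrite [in LHS](bigD1 (Ordinal lt)) //= [in RHS](bigD1 (Ordinal lt)) //= eqxx a1k0 act0r add0r addrC.
    congr (_ + _); apply: eq_bigr => i ne.
    have -> : (i == k0 :> nat) = false by apply/negbTE; apply: contraNN ne => /eqP e; apply/eqP/val_inj.
    done.
  have eq : k0 = N by apply/eqP; rewrite eqn_leq k0N ge.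
  have a1N : a1 N = 0 by rewrite -eq.
  rewrite a1N act0r addr0; apply: eq_bigr => i _.
  by rewrite eq (ltn_eqF (ltn_ord i)).
have [cN' BcN' [ccN' _]] := Binv (Bc N.+1) cN.
exists (- \sum_(k < N.+1) act (u k) (c k * cN')).
split; first by apply/SN/S_sum => i; apply: Sact; [apply: uS|apply: BM].
rewrite phiN; last by apply/S_sum => i; apply: Sact; [apply: uS|apply: BM].
rewrite (Hlin (fun i => c i * cN')); last by move=> i; apply: BM.
under eq_bigr => i _ do rewrite -actA.
rewrite -act_suml.
have -> : \sum_(i < N.+1) act (phi (u i)) (c i) = - act y (c N.+1).
  by apply/eqP; rewrite -subr_eq0 opprK Hsum.
by rewrite actNl opprK actA ccN' act1.
Qed.

End LinAlg.

Section P1.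
Variables (D : unitRingType) (sigma : {rmorphism D -> D}) (delta : D -> D).
Hypothesis divD : division_ring D.
Hypothesis sinj : injective sigma.
Hypothesis dD : left_sigma_derivation sigma delta.

Local Notation T := (tmul sigma delta).
Local Notation sm := (smul sigma delta).
Implicit Types p q r d g h u : {poly D}.
Implicit Types c : D.

Lemma deltaD x y : delta (x + y) = delta x + delta y. Proof. exact: (proj1 dD). Qed.
Lemma deltaM x y : delta (x * y) = sigma x * delta y + delta x * y. Proof. exact: (proj2 dD). Qed.
Lemma delta0 : delta 0 = 0.
Proof. have H := deltaD 0 0; rewrite addr0 in H; by apply: (addrI (delta 0)); rewrite addr0 -H. Qed.
Lemma deltaN x : delta (- x) = - delta x.
Proof. by apply/eqP; rewrite -subr_eq0 opprK -deltaD addNr delta0. Qed.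
Lemma deltaB x y : delta (x - y) = delta x - delta y.
Proof. by rewrite deltaD deltaN. Qed.
Lemma delta1 : delta 1 = 0.
Proof. have H := deltaM 1 1; rewrite !mulr1 rmorph1 mul1r in H; by apply: (addrI (delta 1)); rewrite addr0 -H. Qed.

Lemma mulf_neq0D (x y : D) : x != 0 -> y != 0 -> x * y != 0.
Proof.
move=> x0 y0; apply/eqP => xy0; move/eqP: y0; apply.
by rewrite -(mulKr (divD x0) y) xy0 mulr0.
Qed.

Lemma iter_sigma_neq0 i (x : D) : x != 0 -> iter i sigma x != 0.
Proof.
move=> x0; elim: i => //= i IH; apply/eqP => h; move/eqP: IH; apply.
by apply: sinj; rewrite h rmorph0.
Qed.

Lemma sizeE (p : {poly D}) n : p`_n != 0 -> (size p <= n.+1)%N -> size p = n.+1.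
Proof.
move=> pn sp; apply/eqP; rewrite eqn_leq sp /= ltnNge; apply: contra pn => h.
by rewrite nth_default.
Qed.

Lemma coef_last (q : {poly D}) s : size q = s.+1 -> q`_s != 0.
Proof.
move=> sq; have : lead_coef q != 0 by rewrite lead_coef_eq0 -size_poly_eq0 sq.
by rewrite /lead_coef sq.
Qed.

Lemma coef_mapd (p : {poly D}) i : (map_poly delta p)`_i = delta p`_i.
Proof. exact: coef_map_id0 delta0. Qed.

Lemma coefT (q : {poly D}) i : (T q)`_i = (if i == 0%N then 0 else sigma q`_i.-1) + delta q`_i.
Proof. by rewrite /tmul coefD coefMX coef_mapd; case: (i == 0%N) => //; rewrite coef_map. Qed.

Lemma T_D p q : T (p + q) = T p + T q.
Proof.
apply/polyP => i; rewrite coefD !coefT !coefD deltaD.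
case: (i == 0%N); rewrite ?add0r ?rmorphD //; by rewrite addrACA.
Qed.
Lemma T_0 : T 0 = 0.
Proof. by apply/polyP => i; rewrite coefT !coef0 delta0 rmorph0 addr0; case: (i == 0%N). Qed.
Lemma T_N p : T (- p) = - T p.
Proof. by apply/eqP; rewrite -subr_eq0 opprK -T_D addNr T_0. Qed.
Lemma T_B p q : T (p - q) = T p - T q.
Proof. by rewrite T_D T_N. Qed.
Lemma T_sum n (F : 'I_n -> {poly D}) : T (\sum_(i < n) F i) = \sum_(i < n) T (F i).
Proof. exact: (big_morph T T_D T_0). Qed.
Lemma T_Z c q : T (c *: q) = sigma c *: T q + delta c *: q.
Proof.
apply/polyP => i; rewrite !coefT [RHS]coefD !coefZ coefT deltaM mulrDr addrA; congr (_ + _).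
case: (i == 0%N); rewrite ?mulr0 ?add0r ?addr0 //.
by rewrite rmorphM.
Qed.

Lemma iterT_D i p q : iter i T (p + q) = iter i T p + iter i T q.
Proof. by elim: i => //= i ->; rewrite T_D. Qed.
Lemma iterT_0 i : iter i T 0 = 0.
Proof. by elim: i => //= i ->; rewrite T_0. Qed.
Lemma iterT_N i p : iter i T (- p) = - iter i T p.
Proof. by elim: i => //= i ->; rewrite T_N. Qed.

Lemma size_T (q : {poly D}) : (size (T q) <= (size q).+1)%N.
Proof.
apply/leq_sizeP => j hj; rewrite coefT; case: eqP => [j0|_]; first by rewrite j0 in hj.
rewrite !nth_default ?rmorph0 ?delta0 ?addr0 //; first exact: (leq_trans (leqnSn _)).
by rewrite -ltnS prednK // (leq_trans _ hj).
Qed.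

Lemma size_iterT i (q : {poly D}) : (size (iter i T q) <= size q + i)%N.
Proof.
elim: i => [|i IH] /=; first by rewrite addn0.
by rewrite addnS (leq_trans (size_T _)).
Qed.

Lemma lead_T (q : {poly D}) s : size q = s.+1 -> size (T q) = s.+2 /\ (T q)`_s.+1 = sigma q`_s.
Proof.
move=> sq.
have c : (T q)`_s.+1 = sigma q`_s by rewrite coefT /= (nth_default 0 (n:=s.+1)) ?sq // delta0 addr0.
split => //; apply: sizeE; last by rewrite -sq size_T.
by rewrite c (iter_sigma_neq0 1) // coef_last.
Qed.

Lemma lead_iterT i (q : {poly D}) s : size q = s.+1 ->
  size (iter i T q) = (s + i).+1 /\ (iter i T q)`_(s + i) = iter i sigma q`_s.
Proof.
move=> sq; elim: i => [|i [IHs IHc]] /=; first by rewrite addn0.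
have [h1 h2] := lead_T IHs; by rewrite addnS h1 h2 IHc.
Qed.

Lemma smulE n p q : (size p <= n)%N -> sm p q = \sum_(i < n) p`_i *: iter i T q.
Proof.
move=> H; rewrite /smul (big_ord_widen n (fun i => p`_i *: iter i T q) H) big_mkcond.
apply: eq_bigr => i _; case: ifP => // /negbT; rewrite -leqNgt => h.
by rewrite nth_default // scale0r.
Qed.

Lemma smulDl p1 p2 q : sm (p1 + p2) q = sm p1 q + sm p2 q.
Proof.
have h1 : (size p1 <= size p1 + size p2)%N by apply: leq_addr.
have h2 : (size p2 <= size p1 + size p2)%N by apply: leq_addl.
have h3 : (size (p1 + p2)%R <= size p1 + size p2)%N.
  by apply: (leq_trans (size_polyD _ _)); rewrite geq_max h1 h2.
rewrite (smulE q h1) (smulE q h2) (smulE q h3) -big_split; apply: eq_bigr => i _.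
by rewrite coefD scalerDl.
Qed.
Lemma smul0l q : sm 0 q = 0.
Proof. by rewrite /smul size_poly0 big_ord0. Qed.
Lemma smulNl p q : sm (- p) q = - sm p q.
Proof. by apply/eqP; rewrite -subr_eq0 opprK -smulDl addNr smul0l. Qed.
Lemma smulBl p1 p2 q : sm (p1 - p2) q = sm p1 q - sm p2 q.
Proof. by rewrite smulDl smulNl. Qed.
Lemma smulZl c p q : sm (c *: p) q = c *: sm p q.
Proof.
rewrite (smulE q (size_scale_leq c p)) (smulE q (leqnn (size p))) scaler_sumr.
by apply: eq_bigr => i _; rewrite coefZ scalerA.
Qed.
Lemma smul_suml n (F : 'I_n -> {poly D}) q : sm (\sum_(i < n) F i) q = \sum_(i < n) sm (F i) q.
Proof. exact: (big_morph (sm^~ q) (fun x y => smulDl x y q) (smul0l q)). Qed.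

Lemma smulDr p q1 q2 : sm p (q1 + q2) = sm p q1 + sm p q2.
Proof. by rewrite /smul -big_split; apply: eq_bigr => i _; rewrite iterT_D scalerDr. Qed.
Lemma smul0r p : sm p 0 = 0.
Proof. by rewrite /smul big1 // => i _; rewrite iterT_0 scaler0. Qed.
Lemma smulNr p q : sm p (- q) = - sm p q.
Proof. by apply/eqP; rewrite -subr_eq0 opprK -smulDr addNr smul0r. Qed.
Lemma smulBr p q1 q2 : sm p (q1 - q2) = sm p q1 - sm p q2.
Proof. by rewrite smulDr smulNr. Qed.

Lemma smulC c q : sm c%:P q = c *: q.
Proof. by rewrite (smulE q (size_polyC_leq1 c)) big_ord1 coefC. Qed.
Lemma smul1l q : sm 1 q = q.
Proof. by rewrite -polyC1 smulC scale1r. Qed.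
Lemma smulXn i q : sm 'X^i q = iter i T q.
Proof.
rewrite (smulE q (leqnn (size 'X^i))) size_polyXn big_ord_recr /= coefXn eqxx scale1r big1 ?add0r //.
by move=> j _; rewrite coefXn (ltn_eqF (ltn_ord j)) scale0r.
Qed.

Lemma smul_T q r : sm (T q) r = T (sm q r).
Proof.
rewrite (smulE r (size_T q)) (smulE r (leqnn (size q))) T_sum.
under eq_bigr => i _ do rewrite coefT scalerDl.
rewrite big_split /= big_ord_recl /= scale0r add0r big_ord_recr /=.
rewrite (nth_default 0 (leqnn _)) delta0 scale0r addr0 -big_split /=.
by apply: eq_bigr => i _; rewrite T_Z.
Qed.

Lemma smul_iterT i q r : sm (iter i T q) r = iter i T (sm q r).
Proof. by elim: i => //= i <-; rewrite smul_T. Qed.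

Lemma smulA p q r : sm (sm p q) r = sm p (sm q r).
Proof.
have -> : sm p q = \sum_(i < size p) p`_i *: iter i T q by [].
rewrite smul_suml [RHS]/smul; apply: eq_bigr => i _.
by rewrite smulZl smul_iterT.
Qed.

Lemma smul_size p q : p != 0 -> q != 0 ->
  size (sm p q) = (size p + size q).-1 /\
  (sm p q)`_(size p + size q).-2 = lead_coef p * iter (size p).-1 sigma (lead_coef q).
Proof.
rewrite -!size_poly_eq0 /lead_coef.
case sp: (size p) => [|dp] // _; case sq: (size q) => [|s] // _.
rewrite addnS /= (smulE q (leqnn (size p))) sp big_ord_recr /=.
have [hs hc] := lead_iterT dp sq.
have small : (size (\sum_(i < dp) p`_i *: iter i T q)%R <= s + dp)%N.
  apply: (big_ind (fun x : {poly D} => size x <= s + dp)%N); first by rewrite size_poly0.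
    by move=> x y hx hy; apply: (leq_trans (size_polyD _ _)); rewrite geq_max hx hy.
  move=> i _; apply: (leq_trans (size_scale_leq _ _)); apply: (leq_trans (size_iterT _ _)).
  by rewrite sq addSn -addnS leq_add2l ltn_ord.
have ce : (\sum_(i < dp) p`_i *: iter i T q + p`_dp *: iter dp T q)`_(s + dp) = p`_dp * iter dp sigma q`_s.
  by rewrite coefD (nth_default 0 small) add0r coefZ hc.
have nz : p`_dp * iter dp sigma q`_s != 0.
  by apply: mulf_neq0D; [apply: coef_last| apply/iter_sigma_neq0/coef_last].
rewrite addSn (addnC dp s); split => //.
apply: sizeE; first by rewrite ce.
apply: (leq_trans (size_polyD _ _)); rewrite geq_max (leq_trans small) //.
by apply: (leq_trans (size_scale_leq _ _)); rewrite hs.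
Qed.

Lemma smul_neq0 p q : p != 0 -> q != 0 -> sm p q != 0.
Proof.
move=> p0 q0; have [h _] := smul_size p0 q0; rewrite -size_poly_eq0 h.
move: p0 q0; rewrite -!size_poly_eq0; case: (size p) => // a _; case: (size q) => // b _.
by rewrite addnS.
Qed.

Lemma smul_size_ge p q : p != 0 -> q != 0 -> (size q <= size (sm p q))%N.
Proof.
move=> p0 q0; have [h _] := smul_size p0 q0; rewrite h.
move: p0; rewrite -size_poly_eq0; case: (size p) => // a _; by rewrite addSn /= leq_addl.
Qed.

Lemma smul_size_le p q : (size (sm p q) <= (size p + size q).-1)%N.
Proof.
case: (eqVneq p 0) => [->|p0]; first by rewrite smul0l size_poly0.
case: (eqVneq q 0) => [->|q0]; first by rewrite smul0r size_poly0.
by have [-> _] := smul_size p0 q0.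
Qed.


Lemma T_Xn i : T ('X^i : {poly D}) = 'X^(i.+1).
Proof.
apply/polyP => j; rewrite coefT !coefXn.
have -> : delta (j == i)%:R = 0 by case: (j == i); rewrite ?delta1 ?delta0.
rewrite addr0; case: j => [|j] //=; by rewrite rmorph_nat.
Qed.
Lemma iterT_1 i : iter i T 1 = 'X^i.
Proof. by elim: i => [|i IH] //=; rewrite IH T_Xn. Qed.
Lemma smul1r p : sm p 1 = p.
Proof.
rewrite /smul; under eq_bigr => i _ do rewrite iterT_1.
by rewrite -poly_def coefK.
Qed.

Lemma iter_sigma1 k : iter k sigma 1 = 1.
Proof. by elim: k => //= k ->; rewrite rmorph1. Qed.

Lemma size_le_drop p n : (size p <= n.+1)%N -> p`_n = 0 -> (size p <= n)%N.
Proof.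
move=> h pn; apply/leq_sizeP => j hj; case: (eqVneq j n) => [->//|ne].
by apply: nth_default; apply: (leq_trans h); rewrite ltn_neqAle eq_sym ne hj.
Qed.

Lemma reduce_step d g c : d != 0 -> (size d <= size g)%N ->
  c * iter (size g - size d) sigma (lead_coef d) = lead_coef g ->
  (size (g - sm (c *: 'X^(size g - size d)) d)%R < size g)%N.
Proof.
move=> d0 hdg hc; rewrite smulZl smulXn.
move: hc; set k := (size g - size d)%N => hc.
move: d0; rewrite -size_poly_eq0; case sd: (size d) => [|s] // _.
have [hs hco] := lead_iterT k sd.
have sg : size g = (s + k).+1 by rewrite /k sd -addSn subnKC // -sd.
rewrite sg ltnS; apply: size_le_drop.
  apply: (leq_trans (size_polyD _ _)); rewrite geq_max sg leqnn /= size_polyN.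
  by apply: (leq_trans (size_scale_leq _ _)); rewrite hs.
rewrite coefB coefZ hco; move: hc; rewrite /lead_coef sd sg /= => ->; by rewrite subrr.
Qed.

Lemma rdiv_ex d g : d != 0 -> exists u r, g = sm u d + r /\ (size r < size d)%N.
Proof.
move=> d0; elim: {g}(size g).+1 {-2}g (ltnSn (size g)) => // n IH g hg.
case: (ltnP (size g) (size d)) => [lt|ge]; first by exists 0, g; rewrite smul0l add0r.
set k := (size g - size d)%N.
have ld0 : iter k sigma (lead_coef d) != 0 by apply/iter_sigma_neq0; rewrite lead_coef_eq0.
pose c := lead_coef g * (iter k sigma (lead_coef d))^-1.
have hc : c * iter k sigma (lead_coef d) = lead_coef g by rewrite /c mulrVK //; apply: divD.
have := reduce_step d0 ge hc; rewrite -/k => hlt.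
have [u [r [Hg Hr]]] := IH _ (leq_trans hlt (hg : (size g < n.+1)%N)).
exists (u + c *: 'X^k), r; split => //.
by rewrite smulDl -addrAC -Hg subrK.
Qed.

Lemma rem_uniq d u1 r1 u2 r2 : d != 0 -> sm u1 d + r1 = sm u2 d + r2 ->
  (size r1 < size d)%N -> (size r2 < size d)%N -> u1 = u2 /\ r1 = r2.
Proof.
move=> d0 E h1 h2.
have E2 : sm (u1 - u2) d = r2 - r1.
  have E' : sm u1 d = sm u2 d + r2 - r1 by rewrite -E addrK.
  by rewrite smulBl E' addrAC (addrC (sm u2 d) r2) addrK.
case: (eqVneq (u1 - u2) 0) => [e|ne].
  have eu : u1 = u2 by apply/eqP; rewrite -subr_eq0 e.
  by split => //; rewrite eu in E; apply: (addrI _ E).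
have := smul_size_ge ne d0; rewrite E2 => h.
have : (size (r2 - r1)%R < size d)%N.
  apply: (leq_ltn_trans (size_polyD _ _)); by rewrite size_polyN gtn_max h1 h2.
by rewrite ltnNge h.
Qed.


Definition lact (p : {poly D}) (c : D^c) : {poly D} := (c : D) *: p.

Lemma lact_Binv : forall x : D^c, x \in predT -> x != 0 ->
  exists2 y : D^c, y \in predT & (x * y = 1 /\ y * x = 1).
Proof.
move=> x _ nx; exists ((x : D)^-1) => //; split.
  exact: (mulVr (divD nx)).
exact: (mulrV (divD nx)).
Qed.
Lemma lact_Dl u v c : lact (u + v) c = lact u c + lact v c.
Proof. exact: scalerDr. Qed.
Lemma lact_Dr u (c1 c2 : D^c) : lact u (c1 + c2) = lact u c1 + lact u c2.
Proof. exact: scalerDl. Qed.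
Lemma lact_A u (c1 c2 : D^c) : lact (lact u c1) c2 = lact u (c1 * c2).
Proof. exact: scalerA. Qed.
Lemma lact_1 u : lact u 1 = u.
Proof. exact: scale1r. Qed.

Lemma poly_span N p : (size p <= N)%N -> p = \sum_(j < N) lact 'X^j (p`_j).
Proof.
move=> h; rewrite /lact -poly_def; apply/polyP => k; rewrite coef_poly.
by case: ltnP => // hk; rewrite nth_default // (leq_trans h hk).
Qed.

Lemma left_dep N (v : nat -> {poly D}) : (forall i, (i <= N)%N -> (size (v i) <= N)%N) ->
  exists c : nat -> D, (exists i, (i <= N)%N /\ c i != 0) /\ \sum_(i < N.+1) c i *: v i = 0.
Proof.
move=> hv.
have Hs : spans (K := D^c) predT lact N (fun j => 'X^j) v (fun i j => (v i)`_j).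
  by move=> i hi; split => //; apply: poly_span; apply: hv.
have [c [_ [nz E]]] := dep isT isT (fun _ _ _ _ => isT) (fun _ _ => isT) (fun _ _ _ _ => isT)
  lact_Binv lact_Dl lact_Dr lact_A lact_1 Hs.
by exists c; split.
Qed.

Section Srmod.
Variable f : {poly D}.
Hypothesis fmon : f \is monic.

Lemma f_neq0 : f != 0.
Proof. by apply: monic_neq0. Qed.

Lemma rmodf_spec n g : (size g <= n + (size f).-1)%N ->
  exists u, g = sm u f + rmodf sigma delta f n g /\ (size (rmodf sigma delta f n g) < size f)%N.
Proof.
have sf : (0 < size f)%N by rewrite size_poly_gt0 f_neq0.
elim: n g => [|n IH] g hg /=.
  exists 0; rewrite smul0l add0r; split => //; by apply: (leq_ltn_trans hg); rewrite add0n ltn_predL.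
case: ifP => [lt|/negbT]; first by exists 0; rewrite smul0l add0r.
rewrite -leqNgt => ge.
have hc : lead_coef g * iter (size g - size f) sigma (lead_coef f) = lead_coef g.
  by rewrite (monicP fmon) iter_sigma1 mulr1.
have hlt := reduce_step f_neq0 ge hc.
have hle : (size (g - sm (lead_coef g *: 'X^(size g - size f)) f)%R <= n + (size f).-1)%N.
  by rewrite -ltnS -addSn (leq_trans hlt hg).
have [u [Hu Hs]] := IH _ hle.
by exists (u + lead_coef g *: 'X^(size g - size f)); split => //; rewrite smulDl -addrAC -Hu subrK.
Qed.

Lemma srmod_spec g : exists u, g = sm u f + srmod sigma delta g f /\ (size (srmod sigma delta g f) < size f)%N.
Proof. apply: rmodf_spec; exact: leq_addr. Qed.

Lemma srmod_eq g u r : g = sm u f + r -> (size r < size f)%N -> srmod sigma delta g f = r.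
Proof.
move=> Hg Hr; have [u' [Hu' Hs']] := srmod_spec g.
have [_ E] := rem_uniq f_neq0 (etrans (esym Hu') Hg) Hs' Hr; exact: E.
Qed.

Lemma srmod_small g : (size g < size f)%N -> srmod sigma delta g f = g.
Proof. by move=> h; apply: (srmod_eq (u:=0)) => //; rewrite smul0l add0r. Qed.

Lemma srmod_size g : (size (srmod sigma delta g f) < size f)%N.
Proof. have [u [_ H]] := srmod_spec g; exact: H. Qed.

Lemma srmodD g1 g2 : srmod sigma delta (g1 + g2) f = srmod sigma delta g1 f + srmod sigma delta g2 f.
Proof.
have [u1 [H1 S1]] := srmod_spec g1; have [u2 [H2 S2]] := srmod_spec g2.
apply: (srmod_eq (u := u1 + u2)).
  by rewrite smulDl {1}H1 {1}H2 addrACA.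
by apply: (leq_ltn_trans (size_polyD _ _)); rewrite gtn_max S1 S2.
Qed.

Lemma srmodZ c g : srmod sigma delta (c *: g) f = c *: srmod sigma delta g f.
Proof.
have [u [H S]] := srmod_spec g.
apply: (srmod_eq (u := c *: u)); first by rewrite smulZl {1}H scalerDr.
exact: (leq_ltn_trans (size_scale_leq _ _)).
Qed.

Lemma srmod0 : srmod sigma delta 0 f = 0.
Proof. by apply: srmod_small; rewrite size_poly0 size_poly_gt0 f_neq0. Qed.

Lemma srmodN g : srmod sigma delta (- g) f = - srmod sigma delta g f.
Proof. by apply/eqP; rewrite -subr_eq0 opprK -srmodD addNr srmod0. Qed.

Lemma srmod_mul u : srmod sigma delta (sm u f) f = 0.
Proof. by apply: (srmod_eq (u := u)); rewrite ?addr0 // size_poly0 size_poly_gt0 f_neq0. Qed.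

Hypothesis firr : sirreducible sigma delta f.

Lemma bezout h : h != 0 -> (size h < size f)%N -> exists b g, sm b h = 1 + sm g f.
Proof.
move=> h0 hs.
pose P n := exists b g, sm b h + sm g f != 0 /\ size (sm b h + sm g f) = n.
have [n0 [[b0 [g0 [nz0 sz0]]] Hmin]] : exists n, P n /\ forall k, P k -> (n <= k)%N.
  apply: min_ex; exists (size h), 1, 0; by rewrite smul1l smul0l addr0.
set d0 := sm b0 h + sm g0 f in nz0 sz0.
have inS : forall b g, sm b h + sm g f != 0 -> (size d0 <= size (sm b h + sm g f)%R)%N.
  move=> b g nz; rewrite sz0; apply: Hmin; by exists b, g.
have clos : forall u b1 g1, sm b1 h + sm g1 f - sm u d0 = sm (b1 - sm u b0) h + sm (g1 - sm u g0) f.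
  move=> u b1 g1; rewrite /d0 smulDr !smulBl -!smulA opprD.
  by rewrite addrACA.
have divd : forall x b1 g1, x = sm b1 h + sm g1 f -> exists u, x = sm u d0.
  move=> x b1 g1 Hx; have [u [r [Hx' Hr]]] := rdiv_ex x nz0.
  exists u; case: (eqVneq r 0) => [r0|rn0]; first by rewrite Hx' r0 addr0.
  have er : r = x - sm u d0 by rewrite Hx' addrAC subrr add0r.
  move: (inS (b1 - sm u b0) (g1 - sm u g0)); rewrite -clos -Hx -er => /(_ rn0) h'.
  by rewrite ltnNge h' in Hr.
have [u Hf] : exists u, f = sm u d0 by apply: (divd f 0 1); rewrite smul0l add0r smul1l.
have [u' Hh] : exists u, h = sm u d0 by apply: (divd h 1 0); rewrite smul0l addr0 smul1l.
have u'0 : u' != 0 by apply: contra_neq h0 => e; rewrite Hh e smul0l.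
have u0 : u != 0 by apply: contra_neq f_neq0 => e; rewrite Hf e smul0l.
have sd0 : (size d0 <= size h)%N by rewrite Hh smul_size_ge.
have [szf _] := smul_size u0 nz0.
have sd1 : (size d0 <= 1)%N.
  rewrite leqNgt; apply/negP => gt1; apply: (proj2 firr); exists u, d0; split => //; split.
    rewrite Hf szf; move: gt1; case: (size d0) => [|[|k]] // _.
    by rewrite addnS /= addnS ltnS leq_addr.
  exact: leq_ltn_trans sd0 hs.
have cd := size1_polyC sd1; set c := d0`_0 in cd.
have c0 : c != 0 by apply: contra_neq nz0 => e; rewrite cd e.
exists (c^-1 *: b0), (- (c^-1 *: g0)).
rewrite smulZl smulNl smulZl.
have -> : sm b0 h = d0 - sm g0 f by rewrite /d0 addrK.
rewrite scalerBr cd -mul_polyC -polyCM mulVr ?polyC1 //; exact: divD.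
Qed.

Lemma no_zero_div g h q : (2 <= size f)%N -> g != 0 -> h != 0 -> (size g < size f)%N -> (size h < size f)%N ->
  sm g h = sm q f -> False.
Proof.
move=> f2 g0 h0 gs hs E.
have [N sfN] : exists N, size f = N.+2 by move: f2; case: (size f) => [|[|k]] // _; exists k.
have [b [gm Hb]] := bezout h0 hs.
have ex : forall i, (i <= N)%N -> exists rw : {poly D} * {poly D},
    (size rw.1 <= N)%N /\ sm rw.1 h = 'X^i + sm rw.2 f.
  move=> i _; have [u [r [Hr Sr]]] := rdiv_ex (sm 'X^i b) g0.
  exists (r, sm 'X^i gm - sm u q); split => /=.
    by rewrite -ltnS (leq_trans Sr) // -ltnS -sfN.
  have -> : r = sm 'X^i b - sm u g by rewrite Hr addrAC subrr add0r.
  by rewrite smulBl smulA Hb smulDr smul1r smulA E -!smulA smulBl addrA.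
have [RW HRW] := fin_choice ex.
have [c [[i0 [hi0 ci0]] Hc]] := left_dep (v := fun i => (RW i).1) (fun i hi => proj1 (HRW i hi)).
pose P := \sum_(i < N.+1) c i *: ('X^i : {poly D}).
pose Q := \sum_(i < N.+1) c i *: (RW i).2.
have EP : P = sm (- Q) f.
  have E1 : sm (\sum_(i < N.+1) c i *: (RW i).1) h = P + sm Q f.
    rewrite smul_suml /P /Q smul_suml -big_split; apply: eq_bigr => i _.
    by rewrite !smulZl (proj2 (HRW i (ltn_ord i))) scalerDr.
  by rewrite Hc smul0l in E1; rewrite smulNl; apply/eqP; rewrite -addr_eq0 -E1.
have Pc : P`_i0 = c i0 by rewrite /P -poly_def coef_poly ltnS hi0.
have Ps : (size P <= N.+1)%N by rewrite /P -poly_def size_poly.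
case: (eqVneq (- Q) 0) => [Q0|Qn0].
  by move: ci0; rewrite -Pc EP Q0 smul0l coef0 eqxx.
have := smul_size_ge Qn0 f_neq0; rewrite -EP sfN => h2.
by have := leq_trans h2 Ps; rewrite ltnn.
Qed.


Hypothesis f2 : (2 <= size f)%N.

Definition Sp : pred {poly D} := fun g => (size g < size f)%N.
Lemma inSp x : (x \in Sp) = (size x < size f)%N. Proof. by []. Qed.

Lemma Sp0 : 0 \in Sp. Proof. by rewrite inSp size_poly0 size_poly_gt0 f_neq0. Qed.
Lemma SpD x y : x \in Sp -> y \in Sp -> x + y \in Sp.
Proof. rewrite !inSp => hx hy; apply: (leq_ltn_trans (size_polyD _ _)); by rewrite gtn_max hx hy. Qed.
Lemma SpN x : x \in Sp -> - x \in Sp.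
Proof. by rewrite !inSp size_polyN. Qed.

Lemma mulSf_inj_r a x : a \in Sp -> a != 0 -> x \in Sp -> mulSf sigma delta f x a = 0 -> x = 0.
Proof.
move=> aS a0 xS H; apply/eqP; apply/negP => /negP x0.
have [u [Hu _]] := srmod_spec (sm x a); move: H; rewrite /mulSf => H.
rewrite H addr0 in Hu; exact: (no_zero_div f2 x0 a0 xS aS Hu).
Qed.

Lemma mulSf_inj_l a x : a \in Sp -> a != 0 -> x \in Sp -> mulSf sigma delta f a x = 0 -> x = 0.
Proof.
move=> aS a0 xS H; apply/eqP; apply/negP => /negP x0.
have [u [Hu _]] := srmod_spec (sm a x); move: H; rewrite /mulSf => H.
rewrite H addr0 in Hu; exact: (no_zero_div f2 a0 x0 aS xS Hu).
Qed.

Lemma right_part a : a \in Sp -> a != 0 -> forall b, inSf f b ->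
  exists! x, inSf f x /\ mulSf sigma delta f x a = b.
Proof.
move=> aS a0 b bS.
pose phi x := mulSf sigma delta f x a.
have phiD : forall x y, x \in Sp -> y \in Sp -> phi (x + y) = phi x + phi y.
  by move=> x y _ _; rewrite /phi /mulSf smulDl srmodD.
have phiinj : forall x, x \in Sp -> phi x = 0 -> x = 0 by move=> x xS; exact: mulSf_inj_r aS a0 xS.
have Hsp : spanS (K := D^c) predT lact Sp (size f).-1 (fun j => 'X^j).
  split.
    move=> j hj; rewrite inSp size_polyXn; by rewrite -(ltn_predK f2) ltnS.
  move=> x xS; exists (fun j => x`_j); split => //; apply: poly_span.
  by rewrite -ltnS (ltn_predK f2).
have [x [xS Hx]] := @surj (D^c) predT _ lact isT isT (fun _ _ _ _ => isT) (fun _ _ => isT) (fun _ _ _ _ => isT)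
  lact_Binv lact_Dl lact_Dr lact_A lact_1 Sp phi Sp0 SpD SpN
  (fun x c xS _ => leq_ltn_trans (size_scale_leq _ _) xS)
  (fun x _ => srmod_size _)
  phiD
  (fun x c _ _ => etrans (congr1 (srmod sigma delta ^~ f) (smulZl _ _ _)) (srmodZ _ _))
  phiinj (size f).-1 (fun j => 'X^j) Hsp b bS.
exists x; split; first by split.
move=> y [yS Hy]; apply/eqP; rewrite -subr_eq0; apply/eqP.
apply: phiinj; first by apply: SpD => //; apply: SpN.
have phiN : phi (- y) = - phi y by rewrite /phi /mulSf smulNl srmodN.
have Hy' : phi y = b := Hy.
by rewrite phiD ?SpN // phiN Hx Hy' subrr.
Qed.


Section Left.
Hypothesis sbij : bijective sigma.
Variable B : {pred D}.
Hypothesis Bsub : is_subalgebra sigma delta B.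
Hypothesis Bnuc : forall b, b \in B -> in_right_nucleus sigma delta f b%:P.
Hypothesis Bfree : free_finite_right B.

Lemma B1 : 1 \in B. Proof. by case: Bsub. Qed.
Lemma BD x y : x \in B -> y \in B -> x + y \in B. Proof. by case: Bsub => _ [H _]; apply: H. Qed.
Lemma BN x : x \in B -> - x \in B. Proof. by case: Bsub => _ [_ [H _]]; apply: H. Qed.
Lemma BM x y : x \in B -> y \in B -> x * y \in B. Proof. by case: Bsub => _ [_ [_ [H _]]]; apply: H. Qed.
Lemma B0 : 0 \in B. Proof. by rewrite -(subrr 1); apply/BD/BN; apply: B1. Qed.

Lemma Binv x : x \in B -> x != 0 -> exists2 y, y \in B & (x * y = 1 /\ y * x = 1).
Proof.
move=> xB x0; case: Bfree => n [d [Hsp Hind]].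
case: n d Hsp Hind => [|n] d Hsp Hind.
  have [b [_ E]] := Hsp 1; rewrite big_ord0 in E; exfalso; apply: (negP (oner_neq0 D)); by rewrite E.
have [c [Bc Ec]] := Hsp (d ord0 * x^-1).
have Hz := Hind (fun i => c i * x - (i == ord0)%:R).
have Z : \sum_(i < n.+1) d i * (c i * x - (i == ord0)%:R) = 0.
  under eq_bigr => i _ do rewrite mulrBr mulrA.
  rewrite sumrB -mulr_suml -Ec mulrVK; last exact: divD.
  rewrite (bigD1 ord0) //= mulr1 big1 ?addr0 ?subrr // => i /negbTE ->; by rewrite mulr0.
have h0 := Hz (fun i => BD (BM (Bc i) xB) (BN (if i == ord0 as b return (b%:R \in B) then B1 else B0))) Z ord0.
rewrite eqxx in h0; move/eqP: h0; rewrite subr_eq0 => /eqP yx.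
exists (c ord0) => //; split => //.
have ux : x \is a GRing.unit := divD x0.
have -> : c ord0 = x^-1 by rewrite -[c ord0]mulr1 -(mulrV ux) mulrA yx mul1r.
exact: mulrV.
Qed.

Definition ract (x : {poly D}) (b : D) := sm x b%:P.
Lemma ract_Dl u v c : ract (u + v) c = ract u c + ract v c. Proof. exact: smulDl. Qed.
Lemma ract_Dr u c1 c2 : ract u (c1 + c2) = ract u c1 + ract u c2. Proof. by rewrite /ract polyCD smulDr. Qed.
Lemma ract_A u c1 c2 : ract (ract u c1) c2 = ract u (c1 * c2).
Proof. by rewrite /ract smulA smulC -mul_polyC -polyCM. Qed.
Lemma ract_1 u : ract u 1 = u. Proof. by rewrite /ract polyC1 smul1r. Qed.
Lemma ract_S x c : x \in Sp -> ract x c \in Sp.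
Proof.
rewrite !inSp /ract => h; apply: (leq_ltn_trans (smul_size_le _ _)); apply: (leq_ltn_trans _ h).
by move: (size_polyC_leq1 c); case: (size c%:P) => [|[|]] //= _; rewrite ?addn0 ?addn1 // leq_pred.
Qed.

Lemma iter_sigma_surj s y : exists c, iter s sigma c = y.
Proof.
case: sbij => g gK Kg; exists (iter s g y); elim: s y => //= s IH y.
have -> : g (iter s g y) = iter s g (g y) by rewrite -iterS iterSr.
by rewrite IH Kg.
Qed.

Lemma iter_sigma0 s : iter s sigma 0 = 0.
Proof. by elim: s => //= s ->; rewrite rmorph0. Qed.

Lemma coef_iterT_C s c : (iter s T c%:P)`_s = iter s sigma c.
Proof.
case: (eqVneq c 0) => [->|c0]; first by rewrite polyC0 iterT_0 coef0 iter_sigma0.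
have sc : size c%:P = 0.+1 by rewrite size_polyC c0.
by have [_ ] := lead_iterT s sc; rewrite add0n coefC.
Qed.

Lemma tri_span s (x : {poly D}) : (size x <= s)%N -> exists e : nat -> D, x = \sum_(i < s) iter i T (e i)%:P.
Proof.
elim: s x => [|s IH] x hx.
  exists (fun _ => 0); rewrite big_ord0; by move: hx; rewrite leqn0 size_poly_eq0 => /eqP.
have [y Hy] := iter_sigma_surj s x`_s.
set x' := x - iter s T y%:P.
have hx' : (size x' <= s)%N.
  apply: size_le_drop; last by rewrite coefB coef_iterT_C Hy subrr.
  apply: (leq_trans (size_polyD _ _)); rewrite geq_max hx size_polyN.
  apply: (leq_trans (size_iterT _ _)); by rewrite -add1n leq_add2r size_polyC_leq1.
have [e He] := IH x' hx'.
exists (fun i => if i == s then y else e i); rewrite big_ord_recr /= eqxx.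
rewrite -[x](subrK (iter s T y%:P)) -/x' He; congr (_ + _); apply: eq_bigr => i _.
by rewrite (ltn_eqF (ltn_ord i)).
Qed.

Lemma sum_pair (V : zmodType) m n (F : nat -> nat -> V) : (0 < n)%N ->
  \sum_(k < m * n) F (k %/ n)%N (k %% n)%N = \sum_(i < m) \sum_(j < n) F i j.
Proof.
move=> n0; elim: m => [|m IH]; first by rewrite mul0n !big_ord0.
rewrite mulSnr big_split_ord IH big_ord_recr /=; congr (_ + _); apply: eq_bigr => j _.
by rewrite divnMDl // modnMDl divn_small // modn_small // addn0.
Qed.

Lemma iterT_sum i n (F : 'I_n -> {poly D}) : iter i T (\sum_(j < n) F j) = \sum_(j < n) iter i T (F j).
Proof. exact: (big_morph (iter i T) (iterT_D i) (iterT_0 i)). Qed.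

Lemma left_span : exists N (u : nat -> {poly D}), spanS B ract Sp N u.
Proof.
case: Bfree => n [d [Hsp _]].
case: n d Hsp => [|n] d Hsp.
  have [b [_ E]] := Hsp 1; rewrite big_ord0 in E; exfalso; apply: (negP (oner_neq0 D)); by rewrite E.
pose m := (size f).-1.
pose dn j := d (inord j).
pose u k := iter (k %/ n.+1)%N T (dn (k %% n.+1)%N)%:P.
exists (m * n.+1)%N, u; split.
  move=> k hk; rewrite inSp; apply: (leq_ltn_trans (size_iterT _ _)).
  apply: (leq_ltn_trans (leq_add (size_polyC_leq1 _) (leqnn _))).
  by rewrite add1n -(ltn_predK f2) ltnS ltn_divLR.
move=> x; rewrite inSp => xS.
have hxm : (size x <= m)%N by rewrite -ltnS /m (ltn_predK f2).
have [e He] := tri_span hxm.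
have [BB HBB] := @fin_choice ('I_n.+1 -> D) (fun i bb => (forall j, bb j \in B) /\ e i = \sum_(j < n.+1) d j * bb j) m
  (fun i _ => Hsp (e i)).
pose BB' i := if (i <= m)%N then BB i else (fun _ => 0).
exists (fun k => BB' (k %/ n.+1)%N (inord (k %% n.+1)%N)); split.
  move=> k; rewrite /BB'; case: ifP => h; [exact: (proj1 (HBB _ h)) | exact: B0].
rewrite He.
pose F i j := ract (iter i T (dn j)%:P) (BB' i (inord j)).
rewrite (@sum_pair _ m n.+1 F) //; apply: eq_bigr => i _.
have hi : (i <= m)%N by apply: ltnW.
rewrite (proj2 (HBB i hi)) /F /BB' hi (big_morph polyC (@polyCD D) (@polyC0 D)) iterT_sum.
apply: eq_bigr => j _; rewrite /ract /dn inord_val smul_iterT smulC -mul_polyC -polyCM.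
done.
Qed.

Lemma left_part a : a \in Sp -> a != 0 -> forall b, inSf f b ->
  exists! x, inSf f x /\ mulSf sigma delta f a x = b.
Proof.
move=> aS a0 b bS.
pose phi x := mulSf sigma delta f a x.
have phiD : forall x y, x \in Sp -> y \in Sp -> phi (x + y) = phi x + phi y.
  by move=> x y _ _; rewrite /phi /mulSf smulDr srmodD.
have phiinj : forall x, x \in Sp -> phi x = 0 -> x = 0 by move=> x xS; exact: mulSf_inj_l aS a0 xS.
have phiact : forall x c, x \in Sp -> c \in B -> phi (ract x c) = ract (phi x) c.
  move=> x c xS cB; have [_ Hn] := Bnuc cB.
  have := Hn a x aS xS.
  have E1 : mulSf sigma delta f x c%:P = ract x c by rewrite /mulSf srmod_small //; exact: ract_S.
  have E2 : mulSf sigma delta f (phi x) c%:P = ract (phi x) c.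
    by rewrite /mulSf srmod_small //; apply: ract_S; exact: srmod_size.
  by rewrite E1 -/(phi x) E2 => H; exact: (esym H).
have [N [u Hsp]] := left_span.
have [x [xS Hx]] := surj B0 B1 BD BN BM Binv ract_Dl ract_Dr ract_A ract_1 Sp0 SpD SpN
  (fun x c xS _ => ract_S c xS) (fun x _ => srmod_size _) phiD phiact phiinj Hsp bS.
exists x; split; first by split.
move=> y [yS Hy]; apply/eqP; rewrite -subr_eq0; apply/eqP.
apply: phiinj; first by apply: SpD => //; apply: SpN.
have phiN : phi (- y) = - phi y by rewrite /phi /mulSf smulNr srmodN.
have Hy' : phi y = b := Hy.
have Hx' : phi x = b := Hx.
by rewrite phiD ?SpN // phiN Hx' Hy' subrr.
Qed.

Lemma Sf_div : Sf_division sigma delta f.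
Proof.
move=> a aS a0; split; [exact: left_part | exact: right_part].
Qed.

End Left.
End Srmod.
End P1.


End Aux.

Theorem mainTheorem11 (D : unitRingType) (sigma : {rmorphism D -> D})
  (delta : D -> D) (f : {poly D}) :
  division_ring D ->
  bijective sigma ->
  left_sigma_derivation sigma delta ->
  f \is monic -> (2 <= (size f).-1)%N ->
  sirreducible sigma delta f ->
  ((forall c : D, in_right_nucleus sigma delta f c%:P) ->
      Sf_division sigma delta f) /\
  (forall B : {pred D},
      is_subalgebra sigma delta B ->
      (forall b, b \in B -> in_right_nucleus sigma delta f b%:P) ->
      free_finite_right B ->
      Sf_division sigma delta f).
Proof.
move=> divD sbij dD fmon f2 firr.
have sinj : injective sigma := bij_inj sbij.
have f2' : (1 < size f)%N by exact: (leq_trans f2 (leq_pred _)).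
have ii : forall B : {pred D}, is_subalgebra sigma delta B ->
      (forall b, b \in B -> in_right_nucleus sigma delta f b%:P) ->
      free_finite_right B -> Sf_division sigma delta f.
  move=> B Bs Bn Bf; exact: (Aux.Sf_div divD sinj dD fmon firr f2' sbij Bs Bn Bf).
split => // Hn; apply: (ii (fun _ => true)).
- by split; [|split; [|split; [|split]]].
- by move=> b _; exact: Hn.
- exists 1%N, (fun _ => 1); split.
    by move=> x; exists (fun _ => x); split => //; rewrite big_ord1 mul1r.
  by move=> b _; rewrite big_ord1 mul1r => h i; rewrite (ord1 i).
Qed.
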